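(* Let $\vec\sigma$ be a preference profile, $d$ a pseudometric consistent with $\vec\sigma$, $X\in\mathcal A$, and $w_X$ an $X$-truncated weight function for $\vec\sigma$ with $\sum_{Y}w_X^+(Y)d(X,Y)>0$. Suppose $\mathrm{SC}(X,d)\le D\cdot\min_{Z\in\mathcal A}\mathrm{SC}(Z,d)$. Then for every probability distribution $p$ over $\mathcal A$, $$\frac{\mathbb E_{Y\sim p}[\mathrm{SC}(Y,d)]}{\min_{Z\in\mathcal A}\mathrm{SC}(Z,d)}\le D\left(1+\frac{2n\sum_{Y\in\mathcal A}p(Y)\,d(X,Y)}{\sum_{Y\in\mathcal A}w_X^+(Y)\,d(X,Y)}\right).$$
   Context: Setting: $n$ agents $\mathcal N$, $m$ alternatives $\mathcal A$, each agent $i$ with a strict ranking; $X\succ_iY$ means $i$ ranks $X$ above $Y$, and $Y\succeq_iX$ means $Y\succ_iX$ or $Y=X$. A pseudometric $d$ on $\mathcal N\cup\mathcal A$ is consistent with $\vec\sigma$ if $X\succ_iY\Rightarrow d(i,X)\le d(i,Y)$; $\mathrm{SC}(X,d)=\sum_{i}d(i,X)$. An $X$-truncated weight function is $w:\mathcal N\times\mathcal A\to[0,1]$ such that for every agent $i$: $w(i,Y)=0$ whenever $X\succ_iY$, and $\sum_{Y:\,Y\succeq_iX}w(i,Y)=1$. Write $w^+(Y)=\sum_{i\in\mathcal N}w(i,Y)$. *)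

(* Defs.v *)
From mathcomp Require Import all_boot all_order all_algebra.
Set Implicit Arguments. Unset Strict Implicit. Unset Printing Implicit Defensive.
Import Order.TTheory GRing.Theory Num.Theory.
Local Open Scope ring_scope.

(* Agents N and alternatives A are finite types; points of the (pseudo)metric
   space are N + A (agent i is [inl i], alternative X is [inr X]). *)

(* A preference profile: each agent i has a strict ranking of A, encoded by
   an injective rank function; smaller rank = more preferred. *)
Record profile (N A : finType) := Profile {
  rank : N -> A -> nat;
  rank_inj : forall i, injective (rank i) }.

Definition prefers (N A : finType) (s : profile N A) (i : N) (X Y : A) : bool :=
  (rank s i X < rank s i Y)%N.

Definition prefers_eq (N A : finType) (s : profile N A) (i : N) (Y X : A) : bool :=
  prefers s i Y X || (Y == X).

Definition pseudometric (T : Type) (R : numDomainType) (d : T -> T -> R) : Prop :=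
  [/\ forall x, d x x = 0,
      forall x y, 0 <= d x y,
      forall x y, d x y = d y x &
      forall x y z, d x z <= d x y + d y z].

Definition consistent (R : numDomainType) (N A : finType) (s : profile N A)
    (d : N + A -> N + A -> R) : Prop :=
  forall i X Y, prefers s i X Y -> d (inl i) (inr X) <= d (inl i) (inr Y).

Definition SC (R : numDomainType) (N A : finType) (d : N + A -> N + A -> R) (X : A) : R :=
  \sum_(i : N) d (inl i) (inr X).

(* min_{Z in A} SC(Z,d), for A nonempty (witnessed by X0) *)
Definition minSC (R : realDomainType) (N A : finType) (d : N + A -> N + A -> R) (X0 : A) : R :=
  \big[Num.min/SC d X0]_(Z : A) SC d Z.

Definition truncated_weight (R : numDomainType) (N A : finType) (s : profile N A)
    (X : A) (w : N -> A -> R) : Prop :=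
  [/\ forall i Y, 0 <= w i Y <= 1,
      forall i Y, prefers s i X Y -> w i Y = 0 &
      forall i, \sum_(Y : A | prefers_eq s i Y X) w i Y = 1].

Definition wplus (R : numDomainType) (N A : finType) (w : N -> A -> R) (Y : A) : R :=
  \sum_(i : N) w i Y.

Definition distribution (R : numDomainType) (A : finType) (p : A -> R) : Prop :=
  (forall Y, 0 <= p Y) /\ \sum_(Y : A) p Y = 1.

(* Main.v *)
Require Import Defs.
From mathcomp Require Import all_boot all_order all_algebra.
From mathcomp Require Import lra.
Import Order.TTheory GRing.Theory Num.Theory.
Local Open Scope ring_scope.

Lemma fin_ineq (R : realFieldType) (T a D M S K : R) :
  0 < M -> 0 < S -> 0 <= K -> T <= a + K -> a <= D * M -> S <= 2 * a ->
  T / M <= D * (1 + 2 * K / S).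
Proof.
move=> M0 S0 K0 h1 h2 h3.
rewrite ler_pdivrMr //.
have u0 : 0 < S^-1 by rewrite invr_gt0.
have Su : S * S^-1 = 1 by rewrite divff // gt_eqF.
set u := S^-1 in u0 Su *.
have Ku : 0 <= K * u by rewrite mulr_ge0 // ltW.
have : 0 <= (2 * (D * M) - S) * (K * u) by rewrite mulr_ge0 // subr_ge0; lra.
nra.
Qed.

Theorem mainTheorem6 (R : realFieldType) (N A : finType) (s : profile N A)
  (d : N + A -> N + A -> R) (X : A) (w : N -> A -> R) (D : R) (p : A -> R) :
  pseudometric d ->
  consistent s d ->
  truncated_weight s X w ->
  0 < \sum_(Y : A) wplus w Y * d (inr X) (inr Y) ->
  0 < minSC d X ->
  SC d X <= D * minSC d X ->
  distribution p ->
  (\sum_(Y : A) p Y * SC d Y) / minSC d X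
    <= D * (1 + (2 * #|N|%:R * \sum_(Y : A) p Y * d (inr X) (inr Y))
                / (\sum_(Y : A) wplus w Y * d (inr X) (inr Y))).
Proof.
move=> [d0 dge dsym dtri] cons [w01 w0 w1] S0 M0 hD [p0 p1].
rewrite -[2 * #|N|%:R * _]mulrA.
apply: (@fin_ineq R _ (SC d X)) => //.
- by apply: mulr_ge0; [exact: ler0n | apply: sumr_ge0 => Y _; apply: mulr_ge0].
- have hY : forall Y, SC d Y <= SC d X + #|N|%:R * d (inr X) (inr Y).
    move=> Y; rewrite /SC -sum1_card natr_sum mulr_suml -big_split /=.
    apply: ler_sum => i _; rewrite mul1r; exact: dtri.
  apply: le_trans (_ : \sum_Y p Y * (SC d X + #|N|%:R * d (inr X) (inr Y)) <= _).
    by apply: ler_sum => Y _; apply: ler_wpM2l.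
  rewrite (eq_bigr (fun Y => SC d X * p Y + #|N|%:R * (p Y * d (inr X) (inr Y)))).
    by rewrite big_split /= -mulr_sumr -mulr_sumr p1 mulr1.
  by move=> Y _; rewrite mulrDr mulrC; congr (_ + _); rewrite mulrCA.
-
  rewrite /wplus.
  rewrite (eq_bigr (fun Y => \sum_i w i Y * d (inr X) (inr Y))); last first.
    by move=> Y _; rewrite mulr_suml.
  rewrite exchange_big /= /SC mulr_sumr.
  apply: ler_sum => i _.
  have sw : \sum_Y w i Y = 1.
    rewrite (bigID (fun Y => prefers_eq s i Y X)) /= w1 big1 ?addr0 // => Y hY.
    apply: w0; move: hY; rewrite /prefers_eq /prefers negb_or => /andP [h1 h2].
    rewrite -leqNgt leq_eqVlt in h1; case/orP: h1 => // /eqP h.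
    by move: h2; rewrite (rank_inj h) eqxx.
  apply: le_trans (_ : \sum_Y w i Y * (2 * d (inl i) (inr X)) <= _); last first.
    by rewrite -mulr_suml sw mul1r.
  apply: ler_sum => Y _.
  case hp: (prefers s i X Y); first by rewrite w0 // !mul0r.
  apply: ler_wpM2l; first by case/andP: (w01 i Y).
  have hiy : d (inl i) (inr Y) <= d (inl i) (inr X).
    case: (eqVneq Y X) => [-> //|ne].
    apply: cons; rewrite /prefers; move: hp; rewrite /prefers.
    have : rank s i X != rank s i Y.
      by apply/eqP => /(rank_inj) h; move: ne; rewrite h eqxx.
    by rewrite neq_ltn => /orP [->|].
  apply: le_trans (dtri _ (inl i) _) _.
  rewrite [d (inr X) _]dsym mulr_natl mulr2n.
  by rewrite lerD2l.
Qed.
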